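(* Let $\{T(t)\}_{t\in S}\subset L(Y)$ be a dual semigroup representation on $Y\subset X^*$. If $y\in Y$ is both a flight vector and reversible, then $y=0$.
   Context: $X$ is a Banach space, $Y\subset X^*$ a subspace, $S$ an abelian semitopological semigroup (additively written, with unit, Hausdorff, separately continuous addition). A dual semigroup representation is a family $\{T(t)\}_{t\in S}\subset L(Y)$ with (1) $T(s+t)=T(s)T(t)$; (2) $s\mapsto\langle x,T(s)y\rangle$ continuous for all $x\in X,y\in Y$; (3) the $\sigma(X^*,X)$-closure of $O(y)=\{T(t)y:t\in S\}$ lies in $Y$ for each $y\in Y$; (4) each $T(s)$ maps the $\sigma(X^*,X)$-closed absolutely convex hull of $O(y)$ into itself and is $\sigma(X^*,X)$-continuous there. Limits $w^*\text{-}\lim$ in $Y$ are with respect to $\sigma(X^*,X)$. $y\in Y$ is reversible if for every net $(s_\alpha)$ in $S$ for which $w^*\text{-}\lim_\alpha T(s_\alpha)y$ exists there is a net $(t_\gamma)$ in $S$ with $w^*\text{-}\lim_\gamma w^*\text{-}\lim_\alpha T(t_\gamma)T(s_\alpha)y=y$. $y$ is a flight vector if there is a net $(s_\alpha)$ in $S$ with $w^*\text{-}\lim_\alpha T(s_\alpha)y=0$. *)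

(* Defs.v *)
From HB Require Import structures.
From mathcomp Require Import all_boot all_order all_algebra.
From mathcomp Require Import all_classical all_reals topology normedtype.
Set Implicit Arguments. Unset Strict Implicit. Unset Printing Implicit Defensive.
Import Order.TTheory GRing.Theory Num.Theory.
Import numFieldNormedType.Exports.
Local Open Scope classical_set_scope.
Local Open Scope ring_scope.

Record dirset := DirSet {
  dcar :> Type;
  dle : dcar -> dcar -> Prop;
  dle_refl : forall a, dle a a;
  dle_trans : forall a b c, dle a b -> dle b c -> dle a c;
  d_inh : dcar;
  d_dir : forall a b, exists c, dle a c /\ dle b c }.

Definition abelian_semitop_monoid (S : topologicalType) (op : S -> S -> S) (e : S) :=
  [/\ hausdorff_space S, associative op, commutative op,
      left_id e op /\ right_id e op &
      (forall s, continuous (op s)) /\ (forall s, continuous (fun t => op t s))].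

Section Dual.
Context {K : numFieldType} {X : normedModType K}.

(* X^* : continuous linear functionals X -> K (elements of X^* are
   represented as functions X -> K; <x, f> := f x). *)
Definition is_dual (f : X -> K) : Prop :=
  (forall (a : K) (u v : X), f (a *: u + v) = a * f u + f v) /\ continuous f.

Definition is_subspace (Y : set (X -> K)) : Prop :=
  [/\ Y `<=` is_dual, Y (fun _ => 0) &
      forall (a : K) y1 y2, Y y1 -> Y y2 -> Y (fun x => a * y1 x + y2 x)].

Definition wlim (D : dirset) (f : D -> X -> K) (z : X -> K) : Prop :=
  forall (x : X) (eps : K), 0 < eps ->
    exists d0 : D, forall d : D, dle d0 d -> `|f d x - z x| < eps.

Definition wclosure (A : set (X -> K)) : set (X -> K) :=
  [set z | is_dual z /\
     exists (D : dirset) (f : D -> X -> K), (forall d, A (f d)) /\ wlim f z].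

Definition abs_conv_hull (A : set (X -> K)) : set (X -> K) :=
  [set z | exists (n : nat) (lam : 'I_n -> K) (a : 'I_n -> X -> K),
     [/\ forall i, A (a i), \sum_(i < n) `|lam i| <= 1 &
         forall x, z x = \sum_(i < n) lam i * a i x]].

Definition wcont_on (C : set (X -> K)) (F : (X -> K) -> (X -> K)) : Prop :=
  forall (D : dirset) (f : D -> X -> K) (z : X -> K),
    (forall d, C (f d)) -> C z -> wlim f z -> wlim (fun d => F (f d)) (F z).

Section Rep.
Context {S : topologicalType} (op : S -> S -> S).

Definition orbit (T : S -> (X -> K) -> (X -> K)) (y : X -> K) : set (X -> K) :=
  [set z | exists t : S, z = T t y].

Definition dual_sg_rep (Y : set (X -> K)) (T : S -> (X -> K) -> (X -> K)) : Prop :=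
  (forall s y, Y y -> Y (T s y)) /\
  (forall s (a : K) y1 y2, Y y1 -> Y y2 ->
     T s (fun x => a * y1 x + y2 x) = (fun x => a * T s y1 x + T s y2 x)) /\
  (forall s, exists M : K, forall y, Y y -> (forall x, `|y x| <= `|x|) ->
     forall x, `|T s y x| <= M * `|x|) /\
  (forall s t y, Y y -> T (op s t) y = T s (T t y)) /\
  (forall (x : X) y, Y y -> continuous (fun s => T s y x)) /\
  (forall y, Y y -> wclosure (orbit T y) `<=` Y) /\
  (forall s y, Y y ->
     (forall z, wclosure (abs_conv_hull (orbit T y)) z ->
                wclosure (abs_conv_hull (orbit T y)) (T s z)) /\
     wcont_on (wclosure (abs_conv_hull (orbit T y))) (T s)).

Definition reversible (Y : set (X -> K)) (T : S -> (X -> K) -> (X -> K)) (y : X -> K) :=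
  forall (D : dirset) (s : D -> S) (z : X -> K),
    Y z -> wlim (fun a => T (s a) y) z ->
    exists (G : dirset) (t : G -> S) (zz : G -> X -> K),
      (forall g, Y (zz g) /\ wlim (fun a => T (t g) (T (s a) y)) (zz g)) /\
      wlim zz y.

Definition flight_vector (T : S -> (X -> K) -> (X -> K)) (y : X -> K) :=
  exists (D : dirset) (s : D -> S), wlim (fun a => T (s a) y) (fun _ => 0).

End Rep.
End Dual.

(* Main.v *)
Require Import Defs.
From HB Require Import structures.
From mathcomp Require Import all_boot all_order all_algebra.
From mathcomp Require Import all_classical all_reals topology normedtype.
Import Order.TTheory GRing.Theory Num.Theory.
Import numFieldNormedType.Exports.
Local Open Scope classical_set_scope.
Local Open Scope ring_scope.

Lemma small_eq0 (K : numFieldType) (c : K) :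
  (forall eps : K, 0 < eps -> `|c| < eps + eps) -> c = 0.
Proof.
move=> H; apply/eqP; apply/negPn/negP => hc.
have hp : 0 < `|c| / 2 by rewrite divr_gt0 // normr_gt0.
by have := H _ hp; rewrite -splitr ltxx.
Qed.

Lemma wlim_uniq (K : numFieldType) (X : normedModType K) (D : dirset)
  (f : D -> X -> K) z1 z2 : wlim f z1 -> wlim f z2 -> z1 = z2.
Proof.
move=> h1 h2; apply: funext => x; apply/eqP; rewrite -subr_eq0; apply/eqP.
apply: small_eq0 => eps he.
have [d1 H1] := h1 x eps he; have [d2 H2] := h2 x eps he.
have [d [hd1 hd2]] := d_dir d1 d2.
have a := H1 d hd1; have b := H2 d hd2.
rewrite distrC in a.
have -> : z1 x - z2 x = (z1 x - f d x) + (f d x - z2 x) by rewrite addrA subrK.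
by rewrite (le_lt_trans (ler_normD _ _)) // ltrD.
Qed.

Lemma wlim_const (K : numFieldType) (X : normedModType K) (D : dirset)
  (c : X -> K) : wlim (fun _ : D => c) c.
Proof. by move=> x eps he; exists (d_inh D) => d _; rewrite subrr normr0. Qed.

Theorem proposition3p7 (K : numFieldType) (X : completeNormedModType K)
  (S : topologicalType) (op : S -> S -> S) (e : S)
  (Y : set (X -> K)) (T : S -> (X -> K) -> (X -> K)) :
  abelian_semitop_monoid op e -> is_subspace Y -> dual_sg_rep op Y T ->
  forall y : X -> K, Y y -> flight_vector T y -> reversible Y T y ->
  y = (fun _ => 0).
Proof.
move=> _ [YD Y0 _] [TY [Tlin [_ [_ [_ [_ T4]]]]]] y Yy [D [s hs]] rev.
have [G [t [zz [hzz hlim]]]] := rev D s _ Y0 hs.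
have T0 : forall u, T u (fun _ => 0) = (fun _ => 0).
  move=> u; have := Tlin u (-1) _ _ Y0 Y0.
  have -> : (fun x : X => -1 * 0 + 0) = (fun _ => 0 : K).
    by apply: funext => x; rewrite mulr0 addr0.
  move=> ->; apply: funext => x; by rewrite mulN1r addNr.
have C0 : wclosure (abs_conv_hull (Defs.orbit T y)) (fun _ => 0).
  split; first exact: YD.
  exists D, (fun _ => fun _ => 0); split; last exact: wlim_const.
  move=> _; exists 0%N, (fun _ => 0), (fun _ => fun _ => 0); split.
  - by move=> [].
  - by rewrite big_ord0.
  - by move=> x; rewrite big_ord0.
have Cs : forall a, wclosure (abs_conv_hull (Defs.orbit T y)) (T (s a) y).
  move=> a; split; first by apply: YD; apply: TY.
  exists D, (fun _ => T (s a) y); split; last exact: wlim_const.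
  move=> _; exists 1%N, (fun _ => 1), (fun _ => T (s a) y); split.
  - by move=> _; exists (s a).
  - by rewrite big_ord1 normr1.
  - by move=> x; rewrite big_ord1 mul1r.
have zz0 : forall g, zz g = (fun _ => 0).
  move=> g; have [_ hg] := hzz g.
  have hc := (T4 (t g) y Yy).2 D (fun a => T (s a) y) _ Cs C0 hs.
  by rewrite T0 in hc; exact: wlim_uniq hg hc.
have : wlim (fun _ : G => (fun _ : X => 0 : K)) y.
  by move=> x eps he; have [g0 H] := hlim x eps he; exists g0 => g hg; have := H g hg; rewrite zz0.
move=> h; apply: funext => x; apply/eqP; rewrite -subr_eq0 subr0; apply/eqP; apply: small_eq0 => eps he; have [g0 H] := h x eps he; have := H g0 (dle_refl g0); rewrite sub0r normrN => hh; apply: (lt_trans hh); by rewrite ltrDr.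
Qed.
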